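(* Let $\mathcal{X}$ be a compact 2-dimensional Riemannian manifold embedded in $\mathbb{R}^3$, let $\{\phi_k\}_{k\in\mathbb{N}}$ be an orthonormal basis of $L^2(\mathcal{X})$ consisting of Laplace–Beltrami eigenfunctions ($\Delta\phi_k=\lambda_k\phi_k$, ordered by eigenvalue), and let $X\in L^2(\mathcal{X},\mathbb{R}^3)$ be the coordinate function of $\mathcal{X}$. For $\sigma>0$ and $K>0$ define the shell operator $$\mathcal{S}_K(X):=\sum_{k=1}^{\infty}\frac{1}{1+\exp\bigl(\sigma(k-K)\bigr)}\,\langle \phi_k, X\rangle_{L^2}\,\phi_k,$$ where $\langle\phi_k,X\rangle_{L^2}\in\mathbb{R}^3$ is taken componentwise. Then, whenever $\mathcal{S}_{K+1}(X)\neq 0$, $$\frac{\bigl\|\mathcal{S}_{K+1}(X)-\mathcal{S}_{K}(X)\bigr\|_{L^2}}{\bigl\|\mathcal{S}_{K+1}(X)\bigr\|_{L^2}}\leq|1-e^{-\sigma}|,$$ and $|1-e^{-\sigma}|=\mathcal{O}(\sigma)$ as $\sigma\to 0$.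
   Context: The $L^2$ norm of an $\mathbb{R}^3$-valued function is $\|f\|_{L^2}^2=\int_{\mathcal{X}}|f|^2$, with $|\cdot|$ the Euclidean norm. The parameter $\sigma$ is called the upsampling variance; $\mathcal{S}_K(X)$ is a smoothed version of the coordinate function obtained by sigmoid-weighted projection onto the Laplace–Beltrami eigenfunctions. *)

(* Defs.v *)
From HB Require Import structures.
From mathcomp Require Import all_boot all_order all_algebra.
From mathcomp Require Import all_classical all_reals all_analysis.
Set Implicit Arguments. Unset Strict Implicit. Unset Printing Implicit Defensive.
Import Order.TTheory GRing.Theory Num.Theory.
Import numFieldNormedType.Exports.
Local Open Scope classical_set_scope.
Local Open Scope ring_scope.

Section Defs.
Context (R : realType) (d : measure_display) (T : measurableType d)
  (mu : {measure set T -> \bar R}).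

Definition sq_int (f : T -> R) : \bar R := (\int[mu]_x ((f x) ^+ 2)%:E)%E.

Definition L2 (f : T -> R) : Prop :=
  measurable_fun setT f /\ (sq_int f < +oo)%E.

Definition inner (f g : T -> R) : R := fine (\int[mu]_x (f x * g x)%:E)%E.

Definition orthonormal_basis (phi : nat -> T -> R) : Prop :=
  (forall k, L2 (phi k)) /\
  (forall j k, inner (phi j) (phi k) = (j == k)%:R) /\
  (forall f, L2 f -> (forall k, inner f (phi k) = 0) -> sq_int f = 0%E).

Definition L2vec (f : 'I_3 -> T -> R) : Prop := forall i, L2 (f i).

Definition l2sq (f : 'I_3 -> T -> R) : \bar R :=
  (\int[mu]_x (\sum_(i < 3) (f i x) ^+ 2)%:E)%E.

Definition L2norm (f : 'I_3 -> T -> R) : R := Num.sqrt (fine (l2sq f)).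

(* sigmoid weight of the k-th basis element; phi k stands for phi_{k+1}
   of the paper, so the paper's index is k.+1 *)
Definition shell_weight (sigma K : R) (k : nat) : R :=
  (1 + expR (sigma * (k.+1%:R - K)))^-1.

Definition shell_partial (phi : nat -> T -> R) (X : 'I_3 -> T -> R)
  (sigma K : R) (N : nat) : 'I_3 -> T -> R :=
  fun i x => \sum_(k < N) shell_weight sigma K k * inner (phi k) (X i) * phi k x.

(* g is (a representative of) S_K(X): the L^2 limit of the partial sums *)
Definition is_shell (phi : nat -> T -> R) (X : 'I_3 -> T -> R)
  (sigma K : R) (g : 'I_3 -> T -> R) : Prop :=
  L2vec g /\
  (fun N : nat => L2norm (fun i x => g i x - shell_partial phi X sigma K N i x))
    @ \oo --> (0 : R).

End Defs.

(* Main.v *)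
Set Warnings "-all".
Require Import Defs.
From HB Require Import structures.
From mathcomp Require Import all_boot all_order all_algebra.
From mathcomp Require Import all_classical all_reals all_analysis.
From mathcomp Require Import measurable_realfun.
From mathcomp Require Import ring lra.
Import Order.TTheory GRing.Theory Num.Theory.
Import numFieldNormedType.Exports.
Local Open Scope ring_scope.

Set Implicit Arguments. Unset Strict Implicit.
Section L2theory.
Context (R : realType) (d : measure_display) (T : measurableType d)
  (mu : {measure set T -> \bar R}).
Implicit Types f g h : T -> R.

Lemma L2_int f : L2 mu f -> mu.-integrable setT (EFin \o (fun x => f x ^+ 2)).
Proof.
case=> mf fin; apply/integrableP; split.
  by apply/measurable_EFinP; exact: measurable_funX.
rewrite (_ : (fun x => _) = (fun x => (f x ^+ 2)%:E)) //.
by apply/funext => x /=; rewrite ger0_norm // sqr_ge0.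
Qed.

Lemma int_L2 f : measurable_fun setT f ->
  mu.-integrable setT (EFin \o (fun x => f x ^+ 2)) -> L2 mu f.
Proof.
move=> mf /integrableP [_ fin]; split => //.
move: fin; rewrite /sq_int.
rewrite (_ : (fun x => _) = (fun x => (f x ^+ 2)%:E)) //.
by apply/funext => x /=; rewrite ger0_norm // sqr_ge0.
Qed.

Lemma L2_meas f : L2 mu f -> measurable_fun setT f.
Proof. by case. Qed.

Lemma L2_mul f g : L2 mu f -> L2 mu g ->
  mu.-integrable setT (EFin \o (fun x => f x * g x)).
Proof.
move=> hf hg.
have I2 := (integrableD measurableT (L2_int hf) (L2_int hg)).
apply: (le_integrable measurableT _ _ I2).
  apply/measurable_EFinP; apply: measurable_funM; exact: L2_meas.
move=> x _ /=.
rewrite lee_fin normrM (ger0_norm (addr_ge0 (sqr_ge0 _) (sqr_ge0 _))).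
rewrite -(real_normK (num_real (f x))) -(real_normK (num_real (g x))).
have := normr_ge0 (f x); have := normr_ge0 (g x).
set a := `|f x|; set b := `|g x|; move=> ha hb; nra.
Qed.

Lemma L2D f g : L2 mu f -> L2 mu g -> L2 mu (fun x => f x + g x).
Proof.
move=> hf hg.
have mfg : measurable_fun setT (fun x => f x + g x).
  exact: measurable_funD (L2_meas hf) (L2_meas hg).
apply: int_L2 => //.
have I2 := integrableD measurableT (integrableZl measurableT 2 (L2_int hf)) (integrableZl measurableT 2 (L2_int hg)).
apply: (le_integrable measurableT _ _ I2).
  by apply/measurable_EFinP; exact: measurable_funX.
move=> x _ /=; rewrite lee_fin.
rewrite !ger0_norm ?sqr_ge0 //; last by rewrite addr_ge0 // mulr_ge0 // sqr_ge0.
have := sqr_ge0 (f x - g x); nra.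
Qed.

Lemma L2Z a f : L2 mu f -> L2 mu (fun x => a * f x).
Proof.
move=> hf.
have mf : measurable_fun setT (fun x => a * f x).
  exact: measurable_funM (measurable_cst a) (L2_meas hf).
apply: int_L2 => //.
apply: eq_integrable (integrableZl measurableT (a ^+ 2) (L2_int hf)) => // x _ /=.
by rewrite -EFinM exprMn.
Qed.

Lemma L2_0 : L2 mu (fun _ => 0).
Proof.
apply: int_L2; first exact: measurable_cst.
apply: (eq_integrable measurableT (cst 0%:E)) (integrable0 mu setT) => x _ /=.
by rewrite expr0n.
Qed.

Lemma L2_sum n (F : 'I_n -> T -> R) : (forall k, L2 mu (F k)) ->
  L2 mu (fun x => \sum_(k < n) F k x).
Proof.
elim: n F => [|n IH] F hF.
  by under eq_fun do rewrite big_ord0; exact: L2_0.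
under eq_fun do rewrite big_ord_recr /=.
apply: L2D => //; exact: IH.
Qed.

Lemma innerE f g : inner mu f g = \int[mu]_(x in setT) (f x * g x).
Proof. by []. Qed.

Lemma innerDl f g h : L2 mu f -> L2 mu g -> L2 mu h ->
  inner mu (fun x => f x + g x) h = inner mu f h + inner mu g h.
Proof.
move=> hf hg hh; rewrite !innerE.
under eq_Rintegral do rewrite mulrDl.
by rewrite RintegralD //; exact: L2_mul.
Qed.

Lemma innerZl a f h : L2 mu f -> L2 mu h ->
  inner mu (fun x => a * f x) h = a * inner mu f h.
Proof.
move=> hf hh; rewrite !innerE.
under eq_Rintegral do rewrite -mulrA.
by rewrite RintegralZl //; exact: L2_mul.
Qed.

Lemma innerC f g : inner mu f g = inner mu g f.
Proof. by rewrite !innerE; under eq_Rintegral do rewrite mulrC. Qed.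

Lemma inner_ge0 f : 0 <= inner mu f f.
Proof. by rewrite innerE; apply: Rintegral_ge0 => x _; rewrite -expr2 sqr_ge0. Qed.


Lemma innerDr f g h : L2 mu f -> L2 mu g -> L2 mu h ->
  inner mu h (fun x => f x + g x) = inner mu h f + inner mu h g.
Proof. by move=> *; rewrite innerC innerDl // ![inner mu _ h]innerC. Qed.

Lemma innerZr a f h : L2 mu f -> L2 mu h ->
  inner mu h (fun x => a * f x) = a * inner mu h f.
Proof. by move=> *; rewrite innerC innerZl // innerC. Qed.

Lemma int_sum n (H : 'I_n -> T -> R) :
  (forall i, mu.-integrable setT (EFin \o H i)) ->
  mu.-integrable setT (EFin \o (fun x => \sum_(i < n) H i x)).
Proof.
elim: n H => [|n IH] H hH.
  apply: (eq_integrable measurableT (cst 0%:E)) (integrable0 mu setT) => x _ /=.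
  by rewrite big_ord0.
have I := integrableD measurableT (IH (fun i => H (widen_ord (leqnSn n) i)) (fun i => hH _)) (hH ord_max).
by apply: (eq_integrable measurableT _ _ _ I) => x _ /=; rewrite big_ord_recr.
Qed.

Lemma Rint_sum n (H : 'I_n -> T -> R) :
  (forall i, mu.-integrable setT (EFin \o H i)) ->
  \int[mu]_(x in setT) (\sum_(i < n) H i x) = \sum_(i < n) \int[mu]_(x in setT) H i x.
Proof.
elim: n H => [|n IH] H hH.
  rewrite big_ord0; under eq_Rintegral do rewrite big_ord0.
  by rewrite /Rintegral integral0.
under eq_Rintegral do rewrite big_ord_recr.
rewrite RintegralD //; last by apply: int_sum.
by rewrite IH // big_ord_recr.
Qed.

Definition V (F G : 'I_3 -> T -> R) := \sum_(i < 3) inner mu (F i) (G i).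

Lemma VE F : L2vec mu F -> L2norm mu F = Num.sqrt (V F F).
Proof.
move=> hF; rewrite /L2norm /V /l2sq.
congr Num.sqrt.
rewrite (_ : fine _ = \int[mu]_(x in setT) (\sum_(i < 3) F i x ^+ 2)) //.
rewrite Rint_sum; last by move=> i; apply: L2_int.
by apply: eq_bigr => i _; rewrite innerE; under eq_Rintegral do rewrite expr2.
Qed.

Lemma V_ge0 F : 0 <= V F F.
Proof. by apply: sumr_ge0 => i _; exact: inner_ge0. Qed.

Definition comb (F G : 'I_3 -> T -> R) t := fun i x => F i x + t * G i x.

Lemma L2vec_comb F G t : L2vec mu F -> L2vec mu G -> L2vec mu (comb F G t).
Proof. by move=> hF hG i; apply: L2D => //; apply: L2Z. Qed.

Lemma V_comb F G t : L2vec mu F -> L2vec mu G ->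
  V (comb F G t) (comb F G t) = V F F + 2 * t * V F G + t ^+ 2 * V G G.
Proof.
move=> hF hG; rewrite /V /comb.
rewrite mulr_sumr mulr_sumr -!big_split /=; apply: eq_bigr => i _.
have hZ := L2Z t (hG i).
rewrite innerDl //; last by apply: L2D.
rewrite !innerDr // innerZl // innerZl // !innerZr // (innerC (G i) (F i)).
ring.
Qed.

End L2theory.

Lemma quad_CS (R : realType) (A B C : R) : 0 <= A -> 0 <= C ->
  (forall t, 0 <= A + 2 * t * B + t ^+ 2 * C) -> B ^+ 2 <= A * C.
Proof.
move=> hA hC H.
have [C0|Cpos] := eqVneq C 0.
  have [B0|Bn0] := eqVneq B 0; first by rewrite B0 C0 expr0n mulr0.
  have := H (- (A + 1) / (2 * B)).
  rewrite C0 mulr0 addr0 (_ : 2 * (- (A + 1) / (2 * B)) * B = - (A + 1)); last by field; rewrite Bn0.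
  lra.
have Cp : 0 < C by rewrite lt_def Cpos hC.
have := H (- B / C).
rewrite (_ : A + 2 * (- B / C) * B + (- B / C) ^+ 2 * C = (A * C - B ^+ 2) / C); last by field.
rewrite pmulr_lge0 ?invr_gt0 //; lra.
Qed.

Section L2b.
Context (R : realType) (d : measure_display) (T : measurableType d)
  (mu : {measure set T -> \bar R}).
Implicit Types f g h : T -> R.

Lemma tri F G t : L2vec mu F -> L2vec mu G ->
  L2norm mu (comb F G t) <= L2norm mu F + `|t| * L2norm mu G.
Proof.
move=> hF hG.
rewrite !VE //; last exact: L2vec_comb.
rewrite V_comb //.
set A := V mu F F; set B := V mu F G; set C := V mu G G.
have hA : 0 <= A by exact: V_ge0. have hC : 0 <= C by exact: V_ge0.
have CS : B ^+ 2 <= A * C.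
  apply: quad_CS => // s; rewrite -V_comb //; exact: V_ge0.
have hB : `|B| <= Num.sqrt A * Num.sqrt C.
  rewrite -sqrtrM // -sqrtr_sqr ler_sqrt // mulr_ge0 //.
have hsA := sqrtr_ge0 A; have hsC := sqrtr_ge0 C.
have hRHS : 0 <= Num.sqrt A + `|t| * Num.sqrt C by rewrite addr_ge0 // mulr_ge0.
rewrite -(ger0_norm hRHS) -sqrtr_sqr ler_sqrt ?sqr_ge0 //.
have e1 : (Num.sqrt A + `|t| * Num.sqrt C) ^+ 2 =
  A + 2 * `|t| * (Num.sqrt A * Num.sqrt C) + `|t| ^+ 2 * C.
  rewrite sqrrD exprMn !sqr_sqrtr //; ring.
rewrite e1 real_normK ?num_real //.
have : t * B <= `|t| * `|B|.
  by rewrite -normrM real_ler_norm ?num_real.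
have : 0 <= `|t| := normr_ge0 t.
nra.
Qed.


Lemma L2_lin (phi : nat -> T -> R) n (a : nat -> R) :
  (forall k, L2 mu (phi k)) -> L2 mu (fun x => \sum_(k < n) a k * phi k x).
Proof. by move=> hphi; apply: (L2_sum (F := fun k x => a k * phi k x)) => k; apply: L2Z. Qed.

Lemma inner_sum_l (phi : nat -> T -> R) n (a : nat -> R) g :
  (forall k, L2 mu (phi k)) -> L2 mu g ->
  inner mu (fun x => \sum_(k < n) a k * phi k x) g = \sum_(k < n) a k * inner mu (phi k) g.
Proof.
move=> hphi hg; elim: n => [|n IH].
  rewrite big_ord0; under eq_fun do rewrite big_ord0.
  by rewrite innerE; under eq_Rintegral do rewrite mul0r; rewrite /Rintegral integral0.
under eq_fun do rewrite big_ord_recr /=.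
rewrite innerDl //; [|exact: L2_lin|exact: L2Z].
by rewrite IH innerZl // big_ord_recr.
Qed.

Lemma inner_ortho (phi : nat -> T -> R) n (a b : nat -> R) :
  orthonormal_basis mu phi ->
  inner mu (fun x => \sum_(k < n) a k * phi k x) (fun x => \sum_(k < n) b k * phi k x)
  = \sum_(k < n) a k * b k.
Proof.
move=> [hphi [hon _]].
rewrite inner_sum_l //; last exact: L2_lin.
apply: eq_bigr => k _; congr (_ * _).
rewrite innerC inner_sum_l //.
under eq_bigr do rewrite hon.
rewrite (bigD1 k) //= eqxx mulr1 big1 ?addr0 // => j.
by move=> hj; rewrite (_ : (nat_of_ord j == nat_of_ord k) = false) ?mulr0 //; apply/negbTE; exact: hj.
Qed.

Lemma V_ortho (phi : nat -> T -> R) n (a : nat -> 'I_3 -> R) :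
  orthonormal_basis mu phi ->
  V mu (fun i x => \sum_(k < n) a k i * phi k x) (fun i x => \sum_(k < n) a k i * phi k x)
  = \sum_(i < 3) \sum_(k < n) a k i ^+ 2.
Proof.
move=> hON; apply: eq_bigr => i _.
rewrite (inner_ortho _ (fun k => a k i) (fun k => a k i) hON).
by apply: eq_bigr => k _; rewrite expr2.
Qed.

End L2b.

Lemma weight_ineq (R : realType) (sigma K : R) (k : nat) : 0 < sigma ->
  0 <= shell_weight sigma (K + 1) k - shell_weight sigma K k <=
  (1 - expR (- sigma)) * shell_weight sigma (K + 1) k.
Proof.
move=> hs; rewrite /shell_weight.
set a := expR (sigma * (k.+1%:R - (K + 1))).
have -> : expR (sigma * (k.+1%:R - K)) = a * expR sigma.
  by rewrite /a -expRD; congr expR; ring.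
rewrite expRN.
have ha : 0 < a := expR_gt0 _.
set u := expR sigma.
have hu : 1 < u by rewrite /u expR_gt1.
have hu0 : 0 < u := expR_gt0 _.
have n1 : 1 + a != 0 by rewrite gt_eqF //; lra.
have n2 : 1 + a * u != 0 by rewrite gt_eqF //; nra.
have n3 : u != 0 by rewrite gt_eqF.
apply/andP; split.
  rewrite (_ : (1 + a)^-1 - (1 + a * u)^-1 = a * (u - 1) / ((1 + a) * (1 + a * u))); last by field; rewrite n1 n2.
  by rewrite divr_ge0 // ?mulr_ge0 //; nra.
rewrite -subr_ge0.
rewrite (_ : (1 - u^-1) * (1 + a)^-1 - ((1 + a)^-1 - (1 + a * u)^-1) = (u - 1) / (u * (1 + a) * (1 + a * u))); last by field; rewrite n1 n2 n3.
by rewrite divr_ge0 // ?mulr_ge0 //; nra.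
Qed.

Lemma small_sigma (R : realType) : exists C : R, exists delta : R, 0 < delta /\
        forall s : R, 0 < s < delta -> `|1 - expR (- s)| <= C * s.
Proof.
exists 1, 1; split => // s /andP [hs _].
have h1 : expR (- s) <= 1 by rewrite expR_le1; lra.
have h2 := expR_ge1Dx (- s).
rewrite ger0_norm; lra.
Qed.

Unset Implicit Arguments.

Theorem theorem1 (R : realType) (d : measure_display) (T : measurableType d)
  (mu : {measure set T -> \bar R}) (phi : nat -> T -> R) (X : 'I_3 -> T -> R)
  (sigma K : R) (S1 S0 : 'I_3 -> T -> R) :
  orthonormal_basis mu phi -> L2vec mu X -> 0 < sigma -> 0 < K ->
  is_shell mu phi X sigma (K + 1) S1 -> is_shell mu phi X sigma K S0 ->
  L2norm mu S1 != 0 ->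
  L2norm mu (fun i x => S1 i x - S0 i x) / L2norm mu S1 <= `|1 - expR (- sigma)|
  /\ (exists C : R, exists delta : R, 0 < delta /\
        forall s : R, 0 < s < delta -> `|1 - expR (- s)| <= C * s).
Proof.
move=> hON hX hs hK [hS1 cv1] [hS0 cv0] hn.
split; last exact: small_sigma.
have hphi : forall k, L2 mu (phi k) by case: hON.
set q := 1 - expR (- sigma).
have hq : 0 <= q by rewrite /q subr_ge0 expR_le1; lra.
rewrite ger0_norm //.
have hn0 : 0 < L2norm mu S1 by rewrite lt_def hn sqrtr_ge0.
rewrite ler_pdivrMr // mulrC.
set P1 := shell_partial mu phi X sigma (K + 1).
set P0 := shell_partial mu phi X sigma K.
have LP : forall (a : nat -> 'I_3 -> R) n, L2vec mu (fun i x => \sum_(k < n) a k i * phi k x).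
  by move=> a n i; apply: (L2_lin _ (fun k => a k i)).
have LP1 : forall N, L2vec mu (P1 N) by move=> N; exact: (LP (fun k i => shell_weight sigma (K + 1) k * inner mu (phi k) (X i))).
have LP0 : forall N, L2vec mu (P0 N) by move=> N; exact: (LP (fun k i => shell_weight sigma K k * inner mu (phi k) (X i))).
have key : forall N, L2norm mu (fun i x => P1 N i x - P0 N i x) <= q * L2norm mu (P1 N).
  move=> N.
  set w1 := shell_weight sigma (K + 1). set w0 := shell_weight sigma K.
  have -> : (fun i x => P1 N i x - P0 N i x) =
     (fun i x => \sum_(k < N) ((w1 k - w0 k) * inner mu (phi k) (X i)) * phi k x).
    apply/funext => i; apply/funext => x; rewrite /P1 /P0 /shell_partial -sumrB.
    by apply: eq_bigr => k _; rewrite /w1 /w0; ring.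
  rewrite !VE //; last exact: (LP (fun k i => (w1 k - w0 k) * inner mu (phi k) (X i))).
  rewrite (V_ortho _ (fun k i => (w1 k - w0 k) * inner mu (phi k) (X i))) //.
  rewrite /P1 /shell_partial.
  rewrite (V_ortho _ (fun k i => w1 k * inner mu (phi k) (X i))) //.
  rewrite -(ger0_norm hq) -sqrtr_sqr -sqrtrM ?sqr_ge0 // ler_sqrt; last first.
    by rewrite mulr_ge0 ?sqr_ge0 // sumr_ge0 // => i _; rewrite sumr_ge0 // => k _; rewrite sqr_ge0.
  rewrite mulr_sumr; apply: ler_sum => i _; rewrite mulr_sumr; apply: ler_sum => k _.
  have /andP [h1 h2] := weight_ineq K k hs.
  move: h1 h2; rewrite -/(w1 k) -/(w0 k) -/q.
  set c := inner mu (phi k) (X i); move=> h1 h2.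
  have hx2 : 0 <= q ^+ 2 * w1 k ^+ 2 - (w1 k - w0 k) ^+ 2.
    have -> : q ^+ 2 * w1 k ^+ 2 - (w1 k - w0 k) ^+ 2 =
      (q * w1 k - (w1 k - w0 k)) * (q * w1 k + (w1 k - w0 k)) by ring.
    apply: mulr_ge0; lra.
  rewrite -subr_ge0.
  have -> : q ^+ 2 * (w1 k * c) ^+ 2 - ((w1 k - w0 k) * c) ^+ 2 = (q ^+ 2 * w1 k ^+ 2 - (w1 k - w0 k) ^+ 2) * c ^+ 2 by ring.
  by rewrite mulr_ge0 ?sqr_ge0.
set e1 := fun N => L2norm mu (fun i x => S1 i x - P1 N i x).
set e0 := fun N => L2norm mu (fun i x => S0 i x - P0 N i x).
have est : forall N, L2norm mu (fun i x => S1 i x - S0 i x) <= e1 N + e0 N + q * (L2norm mu S1 + e1 N).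
  move=> N.
  have LE1 : L2vec mu (fun i x => S1 i x - P1 N i x).
    have := L2vec_comb (-1) hS1 (LP1 N).
    suff -> : (fun i x => S1 i x - P1 N i x) = comb S1 (P1 N) (-1) by [].
    by apply/funext => i; apply/funext => x; rewrite /comb; ring.
  have LE0 : L2vec mu (fun i x => S0 i x - P0 N i x).
    have := L2vec_comb (-1) hS0 (LP0 N).
    suff -> : (fun i x => S0 i x - P0 N i x) = comb S0 (P0 N) (-1) by [].
    by apply/funext => i; apply/funext => x; rewrite /comb; ring.
  have LQ : L2vec mu (fun i x => P1 N i x - P0 N i x).
    have := L2vec_comb (-1) (LP1 N) (LP0 N).
    suff -> : (fun i x => P1 N i x - P0 N i x) = comb (P1 N) (P0 N) (-1) by [].
    by apply/funext => i; apply/funext => x; rewrite /comb; ring.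
  have eqD : (fun i x => S1 i x - S0 i x) =
    comb (comb (fun i x => S1 i x - P1 N i x) (fun i x => S0 i x - P0 N i x) (-1))
         (fun i x => P1 N i x - P0 N i x) 1.
    by apply/funext => i; apply/funext => x; rewrite /comb; ring.
  have eqP : P1 N = comb S1 (fun i x => S1 i x - P1 N i x) (-1).
    by apply/funext => i; apply/funext => x; rewrite /comb; ring.
  have t2 := tri (-1) LE1 LE0.
  have t3 : L2norm mu (P1 N) <= L2norm mu S1 + `|-1| * L2norm mu (fun i x => S1 i x - P1 N i x).
    by rewrite {1}eqP; apply: tri.
  have t1 : L2norm mu (fun i x => S1 i x - S0 i x) <= L2norm mu (comb (fun i x => S1 i x - P1 N i x) (fun i x => S0 i x - P0 N i x) (-1)) + `|1| * L2norm mu (fun i x => P1 N i x - P0 N i x).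
    by rewrite {1}eqD; apply: tri => //; apply: L2vec_comb.
  have k := key N.
  have t4 := ler_wpM2l hq t3.
  have n1 : `|-1 : R| = 1 by rewrite normrN1.
  have n2 : `|1 : R| = 1 by rewrite normr1.
  rewrite /e1 /e0.
  clearbody P1 P0 e1 e0 q. rewrite n1 in t2 t4. rewrite n2 in t1. rewrite !mul1r in t1 t2 t4. lra.
move: est; rewrite /e1 /e0 => est; clearbody q.
apply/ler_addgt0Pr => e he.
have q2 : 0 < 2 + q by lra.
set e' := e / (2 + q).
have he' : 0 < e' by rewrite divr_gt0.
have ee : (2 + q) * e' = e by rewrite /e' mulrC -mulrA mulVf ?mulr1 // gt_eqF.
clearbody e'.
have H1 := cvgr_dist_lt _ _ cv1 e' he'.
case: H1 => N1 _ HN1.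
have H0 := cvgr_dist_lt _ _ cv0 e' he'.
case: H0 => N0 _ HN0.
have lm1 : (N1 <= maxn N1 N0)%N := leq_maxl N1 N0.
have lm0 : (N0 <= maxn N1 N0)%N := leq_maxr N1 N0.
have h1 := HN1 (maxn N1 N0) lm1.
have h0 := HN0 (maxn N1 N0) lm0.
have E : forall x : R, 0 <= x -> `|0 - x| = x by move=> x hx; rewrite sub0r normrN ger0_norm.
rewrite E ?sqrtr_ge0 // in h1.
rewrite E ?sqrtr_ge0 // in h0.
have est' := est (maxn N1 N0).
have {}h1 : L2norm mu (fun i x => S1 i x - P1 (maxn N1 N0) i x) < e' := h1.
have {}h0 : L2norm mu (fun i x => S0 i x - P0 (maxn N1 N0) i x) < e' := h0.
have hA := sqrtr_ge0 (fine (l2sq mu (fun i x => S1 i x - P1 (maxn N1 N0) i x))).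
clearbody P1 P0.
have qA := ler_wpM2l hq (ltW h1).
have ee' : 2 * e' + q * e' = e by rewrite -ee; ring.
move: est' h1 h0 hA qA.
rewrite -/(L2norm mu _).
set A := L2norm mu (fun i x => S1 i x - P1 (maxn N1 N0) i x).
set B := L2norm mu (fun i x => S0 i x - P0 (maxn N1 N0) i x).
lra.
Qed.
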